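(* Let $\mu$ be in the relative interior of $\Delta$. If an updating rule respects the Blackwell order for $\mu$ and $\varphi^{\mu}(\mu)\neq\mu$, then there exists $x\neq\mu$ at which $\varphi^{\mu}$ has an expansive error.
   Context: Let $\Theta$ be a finite set of states, $|\Theta|=n\ge2$, and $\Delta=\Delta(\Theta)$ the simplex of beliefs. An experiment $\pi:\Theta\to\Delta(S)$ ($S$ finite) with prior $\mu$ induces the Bayesian distribution over posteriors $\rho_B$, a finitely supported distribution on $\Delta$ with mean $\mu$ (every such distribution arises from some experiment). Blackwell order: $\pi\succeq\pi'$ iff $\rho_B'$ is a mean-preserving contraction of $\rho_B$. An updating rule is given, for each prior $\mu$, by a distortion function $\varphi^{\mu}:\Delta\to\Delta$: when the Bayesian posterior is $x$, the decision maker holds belief $\varphi^{\mu}(x)$. For a compact action set $A$, continuous $u:A\times\Theta\to\mathbb{R}$, and consistent choice $a^*:\Delta\to A$ (i.e. $a^*(y)\in\arg\max_{a}\mathbb{E}_y u(a,\theta)$ for all $y$), let $W(x)=\mathbb{E}_x u(a^*(\varphi^{\mu}(x)),\theta)$. The rule respects the Blackwell order for $\mu$ if for all such $A,u,a^*$ and all $\pi\succeq\pi'$, $\mathbb{E}_{\rho_B}W\ge\mathbb{E}_{\rho_B'}W$. $\varphi^{\mu}$ has an expansive error at $x$ if $\varphi^{\mu}(x)$ does not lie on the closed line segment between $x$ and $\mu$. *)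

(* Defs.v *)
(* States Theta = 'I_n, beliefs = functions 'I_n -> R. *)
From HB Require Import structures.
From mathcomp Require Import all_boot all_order all_algebra.
From mathcomp Require Import all_classical all_reals all_analysis.
Set Implicit Arguments. Unset Strict Implicit. Unset Printing Implicit Defensive.
Import Order.TTheory GRing.Theory Num.Theory.
Import numFieldNormedType.Exports.
Local Open Scope ring_scope.

Section Defs.
Variables (R : realType) (n : nat).

Definition belief := 'I_n -> R.

Definition in_simplex (x : belief) : Prop :=
  (forall i, 0 <= x i) /\ \sum_(i < n) x i = 1.

Definition in_relint (x : belief) : Prop :=
  in_simplex x /\ (forall i, 0 < x i).

(* a finitely supported distribution over beliefs, given by finitely many
   (weight, point) atoms (duplicates / zero weights allowed) *)
Record fdist := FDist {
  fd_size : nat;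
  fd_w : 'I_fd_size -> R;
  fd_pt : 'I_fd_size -> belief }.

Arguments fd_w : clear implicits.
Arguments fd_pt : clear implicits.

(* rho is a finitely supported distribution on the simplex with mean mu
   (= Bayesian distribution of posteriors of some experiment at prior mu) *)
Definition is_post_dist (mu : belief) (rho : fdist) : Prop :=
  [/\ (forall k, 0 <= fd_w rho k),
      \sum_k fd_w rho k = 1,
      (forall k, in_simplex (fd_pt rho k)) &
      (forall th, \sum_k fd_w rho k * fd_pt rho k th = mu th)].

(* rho' is a mean-preserving contraction of rho: there is a Markov kernel
   K (from atoms of rho' to atoms of rho) such that rho = rho' K and the
   conditional mean of rho given each atom y_j of rho' is y_j. *)
Definition mpc (rho' rho : fdist) : Prop :=
  exists K : 'I_(fd_size rho') -> 'I_(fd_size rho) -> R,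
    [/\ (forall j k, 0 <= K j k),
        (forall j, \sum_k K j k = 1),
        (forall k, fd_w rho k = \sum_j fd_w rho' j * K j k) &
        (forall j th, \sum_k fd_w rho' j * K j k * fd_pt rho k th
                      = fd_w rho' j * fd_pt rho' j th)].

Definition expect (rho : fdist) (f : belief -> R) : R :=
  \sum_k fd_w rho k * f (fd_pt rho k).

Definition EU (y : belief) (v : 'I_n -> R) : R := \sum_(th < n) y th * v th.

Definition respects_blackwell (phi : belief -> belief) (mu : belief) : Prop :=
  forall (A : topologicalType) (u : A -> 'I_n -> R) (astar : belief -> A),
    compact [set: A] ->
    (forall th, continuous (fun a => u a th)) ->
    (forall y, in_simplex y -> forall a, EU y (u a) <= EU y (u (astar y))) ->
    forall rho rho' : fdist,
      is_post_dist mu rho -> is_post_dist mu rho' -> mpc rho' rho ->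
      expect rho' (fun x => EU x (u (astar (phi x))))
        <= expect rho (fun x => EU x (u (astar (phi x)))).

Definition expansive_error (phi : belief -> belief) (mu x : belief) : Prop :=
  ~ (exists t : R, 0 <= t <= 1 /\ phi x = (fun i => t * x i + (1 - t) * mu i)).

End Defs.

(* Main.v *)
Require Import Defs.
From mathcomp Require Import all_boot all_order all_algebra.
From mathcomp Require Import all_classical all_reals all_analysis.
From mathcomp Require Import ring lra.
Import Order.TTheory GRing.Theory Num.Theory.
Import numFieldNormedType.Exports.
Local Open Scope ring_scope.

Section Helpers.
Variables (R : realType) (n : nat).

Definition pr (mu v : belief R n) (r : R) : belief R n := fun i => mu i + r * v i.

Lemma EU_lin (a b : R) (x z : belief R n) w :
  EU (fun i => a * x i + b * z i) w = a * EU x w + b * EU z w.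
Proof.
rewrite /EU !mulr_sumr -big_split /=; apply: eq_bigr => i _; ring.
Qed.

Lemma bool_cont (f : bool -> R) : continuous f.
Proof.
move=> b U /= /nbhs_singleton Ub.
rewrite nbhs_principalE; apply/principal_filterP; exact: Ub.
Qed.

End Helpers.
Arguments pr {R n}.
Arguments EU_lin {R n}.

Theorem lemma2 (R : realType) (n : nat) (mu : belief R n)
  (phi : belief R n -> belief R n) :
  (2 <= n)%N ->
  in_relint mu ->
  (forall x, in_simplex x -> in_simplex (phi x)) ->
  respects_blackwell phi mu ->
  phi mu <> mu ->
  exists x : belief R n, [/\ in_simplex x, x <> mu & expansive_error phi mu x].
Proof.
move=> n2 [[mu0 mu1] mupos] phiS RB phimu.
apply: contrapT => Hno.
have seg : forall x, in_simplex x -> x <> mu ->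
    exists t : R, 0 <= t <= 1 /\ phi x = (fun i => t * x i + (1 - t) * mu i).
  move=> x xS xmu; apply: contrapT => H; apply: Hno; exists x; split => //.
set y := phi mu.
have [y0 y1] : in_simplex y by apply: phiS.
have yle1 : forall i, y i <= 1.
  move=> i; rewrite -y1 (bigD1 i) //= lerDl; exact: sumr_ge0.
pose v : belief R n := fun i => y i - mu i.
have sumv : \sum_i v i = 0 by rewrite /v sumrB y1 mu1 subrr.
pose V2 := \sum_i v i ^+ 2.
have V2pos : 0 < V2.
  have [i vi] : exists i, v i != 0.
    apply: contrapT => H; apply: phimu; apply/funext => i.
    apply/eqP; rewrite -subr_eq0; apply/negPn/negP => Hi; apply: H; exists i; exact: Hi.
  rewrite /V2 (bigD1 i) //=.
  have h1 : 0 < v i ^+ 2 by rewrite exprn_even_gt0.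
  have h2 : 0 <= \sum_(j | j != i) v j ^+ 2 by apply: sumr_ge0 => j _; exact: sqr_ge0.
  lra.
pose c := \sum_i mu i * v i + V2 / 2.
pose g : 'I_n -> R := fun th => v th - c.
have EUp : forall r, EU (pr mu v r) g = V2 * (r - 1/2).
  move=> r; rewrite /EU /pr /g.
  rewrite (eq_bigr (fun th => mu th * v th - c * mu th + r * v th ^+ 2 - r * c * v th));
    last by move=> i _; ring.
  rewrite sumrB big_split sumrB /= -!mulr_sumr mu1 sumv /c -/V2; ring.
pose m := \big[Order.min/1]_(i < n) mu i.
have mpos : 0 < m.
  apply: (big_ind (fun x => 0 < x)) => //.
  by move=> a b ha hb; rewrite lt_min ha hb.
have mle : forall i, m <= mu i by move=> i; exact: bigmin_le.
have i0 : 'I_n by exists 0%N; apply: leq_trans n2.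
have mle1 : m <= 1.
  apply: le_trans (mle i0) _; rewrite -mu1 (bigD1 i0) //= lerDl; exact: sumr_ge0.
pose s := m / 4.
have spos : 0 < s by rewrite /s; lra.
have pS : forall r, - (2 * s) <= r <= s -> in_simplex (pr mu v r).
  move=> r /andP[r1 r2]; split.
    move=> i; rewrite /pr /v.
    have := mle i; have := y0 i; have := yle1 i; have := mupos i.
    case: (lerP 0 r) => hr; rewrite /s in r1 r2; nra.
  rewrite /pr big_split /= -mulr_sumr sumv mu1; ring.
have pneq : forall r, r != 0 -> pr mu v r <> mu.
  move=> r r0 E.
  have : V2 * (r - 1/2) = V2 * (0 - 1/2).
    rewrite -EUp E; rewrite -(EUp 0); congr EU; apply/funext => i; rewrite /pr; ring.
  move=> h; move/eqP: r0; apply; nra.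
pose astar := fun z : belief R n => (0 < EU z g)%R.
pose u := fun (a : bool) (th : 'I_n) => if a then g th else 0.
have Wp : forall r, - (2 * s) <= r <= s -> r != 0 ->
    EU (pr mu v r) (u (astar (phi (pr mu v r)))) = 0.
  move=> r hr r0.
  have [t [t01 ->]] := seg _ (pS r hr) (pneq r r0).
  have -> : (fun i => t * pr mu v r i + (1 - t) * mu i) = pr mu v (t * r).
    apply/funext => i; rewrite /pr; ring.
  rewrite /astar EUp.
  have -> : (0 < V2 * (t * r - 1 / 2)) = false.
    apply/negbTE; rewrite -leNgt.
    move/andP: t01 => [t0 t1]; move/andP: hr => [_ r2].
    have : t * r - 1/2 < 0 by case: (lerP 0 r) => h; rewrite /s in r2; nra.
    move=> h; rewrite pmulr_rle0 //; exact: ltW.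
  by rewrite /u /EU big1 // => i _; rewrite mulr0.
pose w2 : 'I_2 -> R := fun _ => 1/2.
pose r2 : 'I_2 -> R := fun k => if val k == 0%N then s else - s.
pose w3 : 'I_3 -> R := fun k => if val k == 0%N then 1/2 else 1/4.
pose r3 : 'I_3 -> R := fun k => if val k == 0%N then s else if val k == 1%N then 0 else - (2 * s).
pose rho' := @FDist R n 2 w2 (fun k => pr mu v (r2 k)).
pose rho := @FDist R n 3 w3 (fun k => pr mu v (r3 k)).
pose K : 'I_2 -> 'I_3 -> R := fun j k =>
  if val j == 0%N then (if val k == 0%N then 1 else 0) else (if val k == 0%N then 0 else 1/2).
have H := RB _ u astar bool_compact.
have Hc : forall th, continuous (fun a => u a th) by move=> th; exact: bool_cont.
have Hopt : forall z, in_simplex z -> forall a, EU z (u a) <= EU z (u (astar z)).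
  move=> z _ a.
  have E0 : EU z (u false) = 0 by rewrite /u /EU big1 // => i _; rewrite mulr0.
  have E1 : EU z (u true) = EU z g by [].
  rewrite /astar; case: a; case: ltP => h; rewrite ?E0 ?E1 //; exact: ltW.
have Hrho : is_post_dist mu rho.
  split => /=.
  - by move=> k; rewrite /w3; case: ifP.
  - rewrite !big_ord_recr big_ord0 /= /w3 /=; lra.
  - move=> k; apply: pS; rewrite /r3; case: ifP => _; first (apply/andP; split; lra).
    case: ifP => _; apply/andP; split; lra.
  - move=> th; rewrite !big_ord_recr big_ord0 /= /w3 /r3 /pr /=; by field.
have Hrho' : is_post_dist mu rho'.
  split => /=.
  - by move=> k; rewrite /w2; lra.
  - rewrite !big_ord_recr big_ord0 /= /w2 /=; lra.
  - move=> k; apply: pS; rewrite /r2; case: ifP => _; apply/andP; split; lra.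
  - move=> th; rewrite !big_ord_recr big_ord0 /= /w2 /r2 /pr /=; by field.
have Hmpc : mpc rho' rho.
  exists K; split => /=.
  - move=> j k; rewrite /K; case: ifP => _; case: ifP => _; lra.
  - move=> j; rewrite !big_ord_recr big_ord0 /= /K; case: ifP => _ /=; lra.
  - move=> k; rewrite !big_ord_recr big_ord0 /= /w3 /w2 /K /=.
    case: k => [[|[|[|k]]] hk] //=; lra.
  - move=> j th; rewrite !big_ord_recr big_ord0 /= /w2 /K /r3 /r2 /pr /=.
    case: j => [[|[|j]] hj] //=; by field.
have := H Hc Hopt rho rho' Hrho Hrho' Hmpc.
rewrite /expect /= !big_ord_recr !big_ord0 /= /w2 /w3 /r2 /r3 /=.
have h1 : - (2*s) <= s <= s by apply/andP; split; lra.
have h2 : - (2*s) <= - s <= s by apply/andP; split; lra.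
have h3 : - (2*s) <= - (2*s) <= s by apply/andP; split; lra.
have nz1 : s != 0 by rewrite gt_eqF.
have nz2 : - s != 0 by rewrite oppr_eq0 gt_eqF.
have nz3 : - (2*s) != 0 by rewrite oppr_eq0 gt_eqF // mulr_gt0.
rewrite (Wp _ h1 nz1) (Wp _ h2 nz2) (Wp _ h3 nz3).
have -> : pr mu v 0 = mu by apply/funext => i; rewrite /pr; ring.
have -> : astar (phi mu) = true.
  rewrite /astar -/y.
  have -> : y = pr mu v 1 by apply/funext => i; rewrite /pr /v; ring.
  rewrite EUp; apply/idP; nra.
have : EU mu (u true) = V2 * (0 - 1/2).
  rewrite -EUp; congr EU; apply/funext => i; rewrite /pr; ring.
rewrite /u => ->; nra.
Qed.
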